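(* Let $V$ be a finite vocabulary and $\mathcal{M}$ a transformer language model with deterministic forward pass and next-token probabilities $P_{\mathcal{M}}(t\mid t_1,\ldots,t_{i-1})$. Let $(t_1,\ldots,t_n)$ be a random token sequence drawn from $P_{\mathcal{M}}$, let $\mathrm{KV}_i = F_{\mathcal{M}}(t_1,\ldots,t_i)$ be the key–value state at position $i$, and assume the layer-1 key vectors $W_K^{(1)}E(t)$, $t\in V$, are pairwise distinct. Define the perplexity $\mathrm{PP}(\mathcal{M})$ by $\log_2\mathrm{PP}(\mathcal{M}) = \frac1n\,\mathbb{E}\bigl[-\log_2 P_{\mathcal{M}}(t_1,\ldots,t_n)\bigr]$. Then \[ \frac1n\sum_{i=1}^n H\bigl(\mathrm{KV}_i \mid \mathrm{KV}_{\leq i-1}\bigr) \;\leq\; \log_2 \mathrm{PP}(\mathcal{M}), \] where for $i=1$ the term is $H(\mathrm{KV}_1)$. In particular, if $\mathrm{PP}(\mathcal{M})\le 20$ the left side is at most $\log_2 20\approx 4.3$ bits.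
   Context: The transformer has $L$ layers, $H_{\mathrm{head}}$ heads and head dimension $d$; $F_{\mathcal{M}}:V^i\to\mathbb{R}^{2LH_{\mathrm{head}}d}$ is the deterministic map sending a prefix to the concatenation over all layers of the key and value vectors at position $i$. This vector contains the layer-1 key $W_K^{(1)}E(t_i)$, with $E$ the token embedding and $W_K^{(1)}$ the layer-1 key projection. $\mathrm{KV}_{\le i-1}=(\mathrm{KV}_1,\ldots,\mathrm{KV}_{i-1})$. Entropies are Shannon entropies in bits of these finitely-valued random variables. *)

(* Defs.v *)
From HB Require Import structures.
From mathcomp Require Import all_boot all_order all_algebra.
From mathcomp Require Import reals exp.
Set Implicit Arguments. Unset Strict Implicit. Unset Printing Implicit Defensive.
Import Order.TTheory GRing.Theory Num.Theory.
Local Open Scope ring_scope.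

Section Info.
Variable R : realType.

(* base-2 logarithm (ln 0 = 0 by library convention; only ever multiplied by 0) *)
Definition log2 (x : R) : R := ln x / ln 2.

Variable Omega : finType.
Variable p : Omega -> R.

Definition law (T : eqType) (X : Omega -> T) (x : T) : R :=
  \sum_(w | X w == x) p w.

Definition values (T : eqType) (X : Omega -> T) : seq T :=
  undup [seq X w | w <- enum Omega].

Definition entropy (T : eqType) (X : Omega -> T) : R :=
  - \sum_(x <- values X) law X x * log2 (law X x).

Definition cond_entropy (T U : eqType) (X : Omega -> T) (Y : Omega -> U) : R :=
  - \sum_(xy <- values (fun w => (X w, Y w)))
      law (fun w => (X w, Y w)) xy * log2 (law (fun w => (X w, Y w)) xy / law Y xy.2).

Definition expect (X : Omega -> R) : R := \sum_w p w * X w.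
End Info.

Definition seq_prob (R : realType) (V : finType) (n : nat)
  (P : seq V -> V -> R) (t : n.-tuple V) : R :=
  \prod_(i < n) P (take i t) (tnth t i).

Definition log2_perplexity (R : realType) (V : finType) (n : nat)
  (P : seq V -> V -> R) : R :=
  n%:R^-1 * expect (seq_prob P) (fun t : n.-tuple V => - log2 (seq_prob P t)).

Definition perplexity (R : realType) (V : finType) (n : nat)
  (P : seq V -> V -> R) : R := powR 2 (@log2_perplexity R V n P).

(* KV_i = F(t_1..t_i), for i = j+1 with j : 'I_n *)
Definition KV (V : finType) (K : Type) (n : nat) (F : seq V -> K)
  (t : n.-tuple V) (j : nat) : K := F (take j.+1 t).

(* KV_{<= i-1} = (KV_1, ..., KV_{i-1}) for i = j+1 *)
Definition KV_prefix (V : finType) (K : Type) (n : nat) (F : seq V -> K)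
  (t : n.-tuple V) (j : nat) : seq K := [seq KV F t k | k <- iota 0 j].

Definition avg_KV_entropy (R : realType) (V : finType) (N n : nat)
  (P : seq V -> V -> R) (F : seq V -> 'rV[R]_N) : R :=
  n%:R^-1 * \sum_(j < n)
     cond_entropy (seq_prob P) (fun t : n.-tuple V => KV F t j) (fun t : n.-tuple V => KV_prefix F t j).

(* Main.v *)
Require Import Defs.
From HB Require Import structures.
From mathcomp Require Import all_boot all_order all_algebra.
From mathcomp Require Import reals exp.
Import Order.TTheory GRing.Theory Num.Theory.
Set Implicit Arguments. Unset Strict Implicit. Unset Printing Implicit Defensive.
Local Open Scope ring_scope.


Section Gen.
Context (R : realType) (Omega : finType) (p : Omega -> R).

Lemma sum_values (T : eqType) (X : Omega -> T) (f : T -> R) :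
  \sum_(x <- values X) law p X x * f x = \sum_w p w * f (X w).
Proof.
rewrite /law.
have -> : \sum_(x <- values X) (\sum_(w | X w == x) p w) * f x =
          \sum_(x <- values X) \sum_w (if X w == x then p w * f (X w) else 0).
  apply: eq_bigr => x _; rewrite big_distrl /= big_mkcond /=.
  by apply: eq_bigr => w _; case: eqP => // ->.
rewrite exchange_big /=; apply: eq_bigr => w _.
have Hin : X w \in values X by rewrite mem_undup; apply: map_f; rewrite mem_enum.
rewrite (bigD1_seq (X w) Hin (undup_uniq _)) /= eqxx big1 ?addr0 //.
by move=> x; rewrite eq_sym => /negbTE ->.
Qed.

Definition Hs (T : eqType) (X : Omega -> T) : R :=
  - \sum_w p w * log2 (law p X (X w)).

Lemma entropy_Hs (T : eqType) (X : Omega -> T) : entropy p X = Hs X.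
Proof. by rewrite /entropy sum_values. Qed.

Hypothesis p0 : forall w, 0 <= p w.

Lemma law_ge (T : eqType) (X : Omega -> T) w : p w <= law p X (X w).
Proof.
rewrite /law (bigD1 w) //= lerDl; apply: sumr_ge0 => *; exact: p0.
Qed.

Lemma cond_Hs (T U : eqType) (X : Omega -> T) (Y : Omega -> U) :
  cond_entropy p X Y = Hs (fun w => (X w, Y w)) - Hs Y.
Proof.
rewrite /cond_entropy sum_values /Hs /= -opprD -sumrB.
congr (- _); apply: eq_bigr => w _.
have [->|pw] := eqVneq (p w) 0; first by rewrite !mul0r subrr.
have pp : 0 < p w by rewrite lt0r pw p0.
have a0 : 0 < law p (fun w => (X w, Y w)) (X w, Y w).
  exact: lt_le_trans pp (law_ge (fun w => (X w, Y w)) w).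
have b0 : 0 < law p Y (Y w) by exact: lt_le_trans pp (law_ge Y w).
rewrite -mulrBr /log2 -mulrBl lnM ?posrE ?invr_gt0 // lnV ?posrE //.
Qed.

Lemma Hs_eq (T U : eqType) (X : Omega -> T) (Y : Omega -> U) :
  (forall w1 w2, (X w1 == X w2) = (Y w1 == Y w2)) -> Hs X = Hs Y.
Proof.
move=> H; rewrite /Hs /law; congr (- _); apply: eq_bigr => w _.
by congr (_ * log2 _); apply: eq_bigl => w'; rewrite H.
Qed.

Lemma Hs_id : Hs (fun w => w) = - \sum_w p w * log2 (p w).
Proof. by rewrite /Hs /law; congr (- _); apply: eq_bigr => w _; rewrite big_pred1_eq. Qed.

Lemma Hs_const (T : eqType) (X : Omega -> T) c :
  (forall w, X w = c) -> \sum_w p w = 1 -> Hs X = 0.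
Proof.
move=> Hc S1; rewrite /Hs /law.
under eq_bigr => w _ do (under eq_bigl => w' do rewrite !Hc eqxx; rewrite S1).
by rewrite /log2 ln1 mul0r big1 ?oppr0 // => w _; rewrite mulr0.
Qed.
End Gen.

Lemma seq_prob_sum (R : realType) (V : finType) (P : seq V -> V -> R)
  (HP1 : forall s, \sum_(t : V) P s t = 1) n s :
  \sum_(t : n.-tuple V) \prod_(i < n) P (s ++ take i t) (tnth t i) = 1.
Proof.
elim: n s => [|n IH] s.
  under eq_bigr => t _ do rewrite big_ord0.
  by rewrite sumr_const card_tuple expn0.
rewrite (reindex (fun xt : V * n.-tuple V => [tuple of xt.1 :: xt.2])) /=; last first.
  exists (fun t : n.+1.-tuple V => (thead t, [tuple of behead t])).
    by case=> x t _ /=; rewrite theadE; congr pair; apply: val_inj.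
  by move=> t _; rewrite [in RHS](tuple_eta t).
rewrite -(pair_bigA _ (fun x (t : n.-tuple V) =>
   \prod_(i < n.+1) P (s ++ take i [tuple of x :: t]) (tnth [tuple of x :: t] i))) /=.
rewrite -[RHS](HP1 s); apply: eq_bigr => x _.
under eq_bigr => t _ do rewrite big_ord_recl /= cats0 tnth0.
rewrite -mulr_sumr -[RHS]mulr1; congr (_ * _); rewrite -[RHS](IH (rcons s x)).
apply: eq_bigr => t _; apply: eq_bigr => i _.
by rewrite tnthS cat_rcons.
Qed.

Theorem mainTheorem2 (R : realType) (V : finType) (L Hh d dm n : nat)
  (P : seq V -> V -> R)
  (HP0 : forall s t, 0 <= P s t)
  (HP1 : forall s, \sum_(t : V) P s t = 1)
  (F : seq V -> 'rV[R]_(2 * L * Hh * d))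
  (E : V -> 'cV[R]_dm) (WK : 'M[R]_(Hh * d, dm))
  (idx : 'I_(Hh * d) -> 'I_(2 * L * Hh * d))
  (Hkey : forall (s : seq V) (t : V) (j : 'I_(Hh * d)),
      F (rcons s t) 0 (idx j) = (WK *m E t) j 0)
  (Hdistinct : injective (fun t => WK *m E t)) :
  avg_KV_entropy n P F <= log2_perplexity n P /\
  (perplexity n P <= 20%:R -> avg_KV_entropy n P F <= log2 20%:R).
Proof.
pose p := @seq_prob R V n P.
have p0 : forall t, 0 <= p t by move=> t; apply: prodr_ge0 => i _; exact: HP0.
have S1 : \sum_t p t = 1 by exact: (seq_prob_sum HP1 n [::]).
pose Z j := fun t : n.-tuple V => KV_prefix F t j.
pose h j := Hs p (Z j).
have step : forall j, cond_entropy p (fun t : n.-tuple V => KV F t j) (Z j) = h j.+1 - h j.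
  move=> j; rewrite cond_Hs //; congr (_ - _); apply: Hs_eq => t1 t2.
  have iS : iota 0 j.+1 = rcons (iota 0 j) j by rewrite -addn1 iotaD cats1.
  rewrite /Z /KV_prefix iS !map_rcons eqseq_rcons.
  by rewrite xpair_eqE andbC.
have h0 : h 0%N = 0.
  by rewrite /h (@Hs_const _ _ p _ (Z 0%N) [::]).


have hn : h n = Hs p (fun t => t).
  apply: Hs_eq => t1 t2; apply/eqP/eqP => [HZ|->] //.
  apply: eq_from_tnth => k.
  have HK : KV F t1 k = KV F t2 k.
    have := congr1 (fun s => nth 0 s k) HZ; rewrite /Z /KV_prefix /=.
    by rewrite !(nth_map 0%N) ?size_iota // nth_iota.
  move: HK; rewrite /KV.
  rewrite !(take_nth (tnth t1 k)) ?size_tuple // -!tnth_nth => HK.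
  apply: Hdistinct; apply/matrixP => a b; rewrite (ord1 b).
  by rewrite -(Hkey (take k t1)) HK Hkey.
have avgE : avg_KV_entropy n P F = log2_perplexity n P.
  rewrite /avg_KV_entropy /log2_perplexity; congr (_ * _).
  rewrite (eq_bigr (fun j : 'I_n => h j.+1 - h j)); last by move=> j _; exact: step.
  rewrite -(big_mkord xpredT (fun j => h j.+1 - h j)) telescope_sumr // h0 subr0 hn.
  by rewrite Hs_id /expect -sumrN; apply: eq_bigr => t _; rewrite mulrN.
rewrite avgE; split => // Hpp.
have l2 : 0 < ln (2 : R) by apply: ln_gt0; rewrite ltr1n.
rewrite /log2 ler_pdivlMr //.
move: Hpp; rewrite /perplexity -ler_ln ?posrE ?powR_gt0 ?ltr0n //.
by rewrite ln_powR.
Qed.
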